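(* Let $T$ be a tree. The faces of $\Delta_T$ having distributable capacity form a subcomplex of $\Delta_T$. Moreover, if $T'$ is a tree with vertex capacities having distributable capacity and $C$ is the vertex obtained by merging two neighboring vertices $C_1,C_2$ of $T'$ (with capacity $\mathrm{cap}(C_1)+\mathrm{cap}(C_2)$), then $\mathrm{cap}(C)\ge\deg(C)$.
   Context: For a tree $T$ on vertex set $[n]$, the Coxeter-like complex $\Delta_T$ has as faces: a set $E^C(F)$ of edges of $T$ to delete together with an assignment to each component $C$ of the resulting forest of exactly $|C|$ labels from $[n]$, each label used exactly once; $\sigma\subseteq\tau$ iff $\sigma$ is obtained from $\tau$ by merging neighboring components. For a tree with vertex capacities and an edge subset $E$, the associated tree has as vertices the components of the forest obtained by deleting $E$, as edges the edges of $E$, and capacity of a component equal to the sum of its vertex capacities. A tree with capacities has distributable capacity if $\mathrm{cap}(v)\ge\deg(v)-1$ for every vertex $v$. A face $F$ of $\Delta_T$ has distributable capacity if the tree associated to $(T,E^C(F))$, with all vertices of $T$ having capacity $1$, has distributable capacity. *)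

(* Defs.v *)
From mathcomp Require Import all_boot.
Set Implicit Arguments. Unset Strict Implicit. Unset Printing Implicit Defensive.

Section Trees.
Variable V : finType.

(* A graph on V is given by its edge set; each edge is a 2-element set. *)
Definition adj (Ed : {set {set V}}) : rel V := fun x y => [set x; y] \in Ed.

Definition is_tree (Ed : {set {set V}}) : Prop :=
  [/\ forall e, e \in Ed -> #|e| = 2,
      forall x y : V, connect (adj Ed) x y
    & (#|Ed|).+1 = #|V| ].

Definition deg (Ed : {set {set V}}) (v : V) : nat := #|[set e in Ed | v \in e]|.

Definition tree_distributable (Ed : {set {set V}}) (cap : V -> nat) : Prop :=
  forall v : V, deg Ed v - 1 <= cap v.

(* Associated tree of (T, E): vertices = components of T after deleting E,
   edges = E, capacity of a component = sum of vertex capacities. *)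
Definition fcomp (Ed E : {set {set V}}) (x : V) : {set V} :=
  [set y | connect (adj (Ed :\: E)) x y].

Definition components (Ed E : {set {set V}}) : {set {set V}} :=
  [set fcomp Ed E x | x : V].

Definition assoc_cap (cap : V -> nat) (C : {set V}) : nat := \sum_(v in C) cap v.

Definition assoc_deg (E : {set {set V}}) (C : {set V}) : nat :=
  #|[set e in E | e :&: C != set0]|.

Definition assoc_distributable (Ed E : {set {set V}}) (cap : V -> nat) : Prop :=
  forall C, C \in components Ed E -> assoc_deg E C - 1 <= assoc_cap cap C.

End Trees.

(* Faces of the Coxeter-like complex Delta_T, T a tree on [n] = 'I_n.
   fE = E^C(F), the set of deleted edges; fL assigns a label set to each
   component of the resulting forest. *)
Record face (n : nat) := Face {
  fE : {set {set 'I_n}};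
  fL : {set 'I_n} -> {set 'I_n} }.

Definition is_face n (T : {set {set 'I_n}}) (F : face n) : Prop :=
  [/\ fE F \subset T,
      forall C, C \in components T (fE F) -> #|fL F C| = #|C|,
      forall C C', C \in components T (fE F) -> C' \in components T (fE F) ->
        C != C' -> [disjoint fL F C & fL F C']
    & \bigcup_(C in components T (fE F)) fL F C = setT ].

(* sigma <= tau: sigma is obtained from tau by merging neighboring components
   (fewer deleted edges; labels of a merged component = union of labels). *)
Definition face_le n (T : {set {set 'I_n}}) (s t : face n) : Prop :=
  fE s \subset fE t /\
  forall C, C \in components T (fE s) ->
    fL s C = \bigcup_(C' in components T (fE t) | C' \subset C) fL t C'.

Definition face_distributable n (T : {set {set 'I_n}}) (F : face n) : Prop :=
  assoc_distributable T (fE F) (fun _ => 1%N).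

(* Main.v *)
Require Import Defs.
From mathcomp Require Import all_boot.
Set Implicit Arguments. Unset Strict Implicit. Unset Printing Implicit Defensive.

Section Helpers.
Variable V : finType.

Lemma adj_sym (G : {set {set V}}) : symmetric (adj G).
Proof. by move=> x y; rewrite /adj setUC. Qed.

Lemma csym (G : {set {set V}}) x y : connect (adj G) x y = connect (adj G) y x.
Proof. exact: (sym_connect_sym (adj_sym G)). Qed.

Lemma closure (G : {set {set V}}) (S : {set V}) x y :
  (forall u w, u \in S -> adj G u w -> w \in S) ->
  x \in S -> connect (adj G) x y -> y \in S.
Proof.
move=> cl xS /connectP [p pth ->]; elim: p x xS pth => [|z p IH] x xS //=.
by case/andP=> xz pth; apply: (IH z (cl _ _ xS xz) pth).
Qed.

Lemma connect_mono (G G' : {set {set V}}) x y :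
  G \subset G' -> connect (adj G) x y -> connect (adj G') x y.
Proof.
move=> sGG'; apply: connect_sub => u w H; apply: connect1.
by rewrite /adj (subsetP sGG') //.
Qed.

Lemma sum_sub (A B : {set V}) (f : V -> nat) :
  A \subset B -> \sum_(v in A) f v <= \sum_(v in B) f v.
Proof.
move=> sAB; rewrite [X in _ <= X](big_setID A) /=.
by rewrite (setIidPr sAB) leq_addr.
Qed.

Lemma sum_disjU (A B : {set V}) (f : V -> nat) :
  [disjoint A & B] -> \sum_(v in A :|: B) f v = \sum_(v in A) f v + \sum_(v in B) f v.
Proof.
move=> dAB; rewrite -(bigU _ _ _ dAB); apply: eq_bigl => v; by rewrite !inE.
Qed.

Lemma deg_D1 (E : {set {set V}}) (C : {set V}) e :
  e \in E -> e :&: C != set0 ->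
  #|[set f in E :\ e | f :&: C != set0]| = assoc_deg E C - 1.
Proof.
move=> eE eC; rewrite /assoc_deg (cardsD1 e [set f in E | f :&: C != set0]).
rewrite inE eE eC /= add1n subn1 /=; idtac.
by apply: eq_card => f; rewrite !inE andbA.
Qed.

Lemma step (Ed E2 : {set {set V}}) (cap : V -> nat) e :
  (forall f, f \in Ed -> #|f| = 2) -> E2 \subset Ed -> e \in E2 ->
  assoc_distributable Ed E2 cap -> assoc_distributable Ed (E2 :\ e) cap.
Proof.
move=> two sE2 eE2 H D /imsetP [x _ ->].
have eEd : e \in Ed := subsetP sE2 _ eE2.
have /cards2P [a [b [_ eab]]] : #|e| == 2 by rewrite two.
set R := adj (Ed :\: E2); set R' := adj (Ed :\: (E2 :\ e)).
have sub : Ed :\: E2 \subset Ed :\: (E2 :\ e).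
  by apply/subsetP=> f; rewrite !inE; case/andP=> nE ->; rewrite (negbTE nE) andbF.
have Rab : R' a b by rewrite /R' /adj -eab !inE eq_refl.
have dec u w : R' u w -> ([set u; w] == e) || R u w.
  by rewrite /R' /R /adj !inE negb_and negbK; case: eqP => //= _ /andP[] ->.
have mono u w : connect R u w -> connect R' u w by apply: connect_mono.
have ae : a \in e by rewrite eab !inE eq_refl.
have be : b \in e by rewrite eab !inE eq_refl orbT.
have degle (E E0 : {set {set V}}) (C : {set V}) : E \subset E0 ->
    assoc_deg E C <= assoc_deg E0 C.
  move=> sEE; apply: subset_leq_card; apply/subsetP=> f; rewrite !inE.
  by case/andP=> /(subsetP sEE) -> ->.
rewrite /fcomp.
case: (boolP (a \in [set y | connect R' x y])) => aD.
- set Ca := [set y | connect R a y]; set Cb := [set y | connect R b y].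
  have xa : connect R' x a by move: aD; rewrite inE.
  have clS : forall u w, u \in Ca :|: Cb -> R' u w -> w \in Ca :|: Cb.
    move=> u w uS /dec /orP [/eqP uwe | Ruw].
      have : w \in e by rewrite -uwe !inE eq_refl orbT.
      rewrite eab !inE => /orP [] /eqP ->; rewrite connect0 ?orbT //.
    move: uS; rewrite !inE => /orP [] H1; apply/orP; [left|right];
      by apply: connect_trans H1 (connect1 Ruw).
  have xS : x \in Ca :|: Cb.
    apply: (closure clS _ (_ : connect R' a x)); first by rewrite !inE connect0.
    by rewrite csym.
  have DS : [set y | connect R' x y] \subset Ca :|: Cb.
    by apply/subsetP=> y; rewrite inE; apply: closure.
  have CaD : Ca \subset [set y | connect R' x y].
    apply/subsetP=> y; rewrite !inE => ay; apply: connect_trans xa (mono _ _ ay).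
  have CbD : Cb \subset [set y | connect R' x y].
    apply/subsetP=> y; rewrite !inE => ay; apply: connect_trans (connect_trans xa (connect1 Rab)) (mono _ _ ay).
  have degD : assoc_deg (E2 :\ e) [set y | connect R' x y] <=
      #|[set f in E2 :\ e | f :&: Ca != set0] :|: [set f in E2 :\ e | f :&: Cb != set0]|.
    apply: subset_leq_card; apply/subsetP=> f; rewrite !inE.
    case/andP=> fE /set0Pn [z]; rewrite !inE => /andP [zf zD].
    have zD' : z \in [set y | connect R' x y] by rewrite inE.
    move: (subsetP DS z zD'); rewrite !inE => /orP [] zC; apply/orP; [left|right];
      rewrite fE; apply/set0Pn; exists z; by rewrite !inE zf.
  have eCa : e :&: Ca != set0 by apply/set0Pn; exists a; rewrite !inE ae connect0.
  have eCb : e :&: Cb != set0 by apply/set0Pn; exists b; rewrite !inE be connect0.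
  have HCa := H Ca (ltac:(by apply/imsetP; exists a)).
  have HCb := H Cb (ltac:(by apply/imsetP; exists b)).
  rewrite /assoc_cap.
  case: (eqVneq Ca Cb) => [eqC | neC].
  + move: degD; rewrite -eqC setUid (deg_D1 eE2 eCa) => degD.
    apply: leq_trans (leq_subr _ _) _; apply: leq_trans degD _.
    apply: leq_trans HCa _; exact: sum_sub.
  + have dis : [disjoint Ca & Cb].
      apply/pred0P=> z /=; apply/negP=> /andP []; rewrite !inE => az bz.
      move/eqP: neC; apply; apply/setP=> y; rewrite !inE.
      have ab : connect R a b by apply: connect_trans az _; rewrite csym.
      apply/idP/idP => H1.
        by apply: connect_trans _ H1; rewrite csym.
      by apply: connect_trans ab H1.
    apply: leq_trans (leq_subr _ _) _; apply: leq_trans degD _.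
    apply: leq_trans (leq_card_setU _ _) _.
    rewrite (deg_D1 eE2 eCa) (deg_D1 eE2 eCb).
    apply: leq_trans (leq_add HCa HCb) _.
    rewrite -sum_disjU //; apply: sum_sub; by rewrite subUset CaD CbD.
- have bD : b \notin [set y | connect R' x y].
    apply: contra aD; rewrite !inE => xb; apply: connect_trans xb (connect1 _).
    by rewrite /R' adj_sym.
  have eqD : [set y | connect R' x y] = [set y | connect R x y].
    apply/eqP; rewrite eqEsubset; apply/andP; split; apply/subsetP=> y; last first.
      by rewrite !inE; apply: mono.
    rewrite inE; apply: closure; last by rewrite inE connect0.
    move=> u w; rewrite inE => xu /dec /orP [/eqP uwe | Ruw].
      have : u \in e by rewrite -uwe !inE eq_refl.
      rewrite eab !inE => /orP [] /eqP uab; subst u.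
        by move: aD; rewrite inE (mono _ _ xu).
      by move: bD; rewrite inE (mono _ _ xu).
    by rewrite inE (connect_trans xu (connect1 Ruw)).
  rewrite eqD; apply: leq_trans (H _ (ltac:(by apply/imsetP; exists x))).
  apply: leq_sub2r; apply: degle; exact: subD1set.
Qed.

Lemma monoE (Ed : {set {set V}}) (cap : V -> nat) :
  (forall f, f \in Ed -> #|f| = 2) ->
  forall n (E2 E1 : {set {set V}}), #|E2| <= n -> E1 \subset E2 -> E2 \subset Ed ->
  assoc_distributable Ed E2 cap -> assoc_distributable Ed E1 cap.
Proof.
move=> two; elim=> [|n IH] E2 E1 cn s12 s2 H.
  move: cn; rewrite leqn0 cards_eq0 => /eqP E20.
  by move: s12; rewrite E20 subset0 => /eqP ->; rewrite -E20.
case: (eqVneq E1 E2) => [-> // | ne].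
have : ~~ (E2 \subset E1) by apply: contra ne => s21; rewrite eqEsubset s12 s21.
case/subsetPn=> e eE2 eE1.
apply: (IH (E2 :\ e)).
- by move: cn; rewrite (cardsD1 e) eE2 add1n ltnS.
- apply/subsetP=> f fE1; rewrite in_setD1 (subsetP s12 _ fE1) andbT.
  by apply/eqP => fe; move: eE1; rewrite -fe fE1.
- exact: subset_trans (subD1set _ _) s2.
- exact: step.
Qed.

End Helpers.

Theorem mainTheorem6 :
  (forall (n : nat) (T : {set {set 'I_n}}), is_tree T ->
     forall s t : face n, is_face T s -> is_face T t -> face_le T s t ->
       face_distributable T t -> face_distributable T s)
  /\
  (forall (V : finType) (Ed : {set {set V}}) (cap : V -> nat) (C1 C2 : V),
     is_tree Ed -> tree_distributable Ed cap -> [set C1; C2] \in Ed ->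
     let E' := Ed :\ [set C1; C2] in
     let C := fcomp Ed E' C1 in
     assoc_deg E' C <= assoc_cap cap C).
Proof.
split.
  move=> n T [two _ _] s t _ [st _ _ _] [sst _] Ht.
  exact: (monoE two (leqnn _) sst st Ht).
move=> V Ed cap C1 C2 [two _ _] Hd eEd; cbv zeta.
set E' := Ed :\ [set C1; C2]. set C := fcomp Ed E' C1.
have ne : C1 != C2.
  apply/negP=> /eqP eq; move: (two _ eEd); rewrite eq setUid cards1 //.
set e := [set C1; C2] in eEd E' C *.
set R := adj (Ed :\: E').
have Radj u w : R u w -> [set u; w] = e.
  by rewrite /R /adj !inE negb_and negbK => /andP [/orP [/eqP // | /negP nE /nE []]].
have CS : C = e.
  apply/eqP; rewrite eqEsubset; apply/andP; split; apply/subsetP=> y.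
    rewrite inE => Hy; apply: (closure _ _ Hy); last by rewrite !inE eq_refl.
    move=> u w _ /Radj uw; by rewrite -uw !inE eq_refl orbT.
  rewrite !inE => /orP [] /eqP ->; first by rewrite connect0.
  apply: connect1; by rewrite /R /adj !inE eq_refl.
rewrite CS /assoc_cap /e big_setU1 ?inE //= big_set1.
have d1 (v : V) : v \in e -> #|[set f in E' | v \in f]| = deg Ed v - 1.
  move=> ve; rewrite /deg (cardsD1 e [set f in Ed | v \in f]) inE eEd ve add1n subn1 /=.
  by apply: eq_card => f; rewrite !inE andbA.
have c1e : C1 \in e by rewrite !inE eq_refl.
have c2e : C2 \in e by rewrite !inE eq_refl orbT.
apply: leq_trans (_ : #|[set f in E' | C1 \in f] :|: [set f in E' | C2 \in f]| <= _).
  apply: subset_leq_card; apply/subsetP=> f; rewrite !inE.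
  case/andP=> -> /set0Pn [z]; rewrite !inE => /andP [zf /orP [] /eqP zC];
    by rewrite -zC zf ?orbT.
apply: leq_trans (leq_card_setU _ _) _.
rewrite (d1 _ c1e) (d1 _ c2e); exact: leq_add.
Qed.
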